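(* Let $(E,\|\cdot\|)$ be a real Banach space, $I=[a,b]$ a closed real interval, $E_0=C(I,E)$ the space of continuous functions $\varphi:I\to E$ with the supremum norm $\|\varphi\|_0=\sup\{\|\varphi(t)\|: t\in I\}$, fix $c\in I$, and let $\mathcal{R}_c=\{\varphi\in E_0: \|\varphi\|_0=\|\varphi(c)\|\}$. The following are equivalent: (a) $\mathcal{R}_c$ is algebraically closed, i.e. $\varphi,\xi\in\mathcal{R}_c$ implies $\varphi-\xi\in\mathcal{R}_c$; (b) $\mathcal{R}_c$ is additive, i.e. $\varphi,\psi\in\mathcal{R}_c$ implies $\varphi+\psi\in\mathcal{R}_c$; (c) $\mathcal{R}_c$ is a linear subspace of $E_0$. *)

(* Defs.v *)
From HB Require Import structures.
From mathcomp Require Import all_boot all_order all_algebra.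
From mathcomp Require Import all_classical all_reals all_analysis.
Set Implicit Arguments. Unset Strict Implicit. Unset Printing Implicit Defensive.
Import Order.TTheory GRing.Theory Num.Theory.
Import numFieldNormedType.Exports.
Local Open Scope classical_set_scope.
Local Open Scope ring_scope.

(* E_0 = C([a,b], E): functions continuous on the closed interval [a,b]
   (represented as functions R -> E; values outside [a,b] are irrelevant). *)
Definition E0 (R : realType) (E : normedModType R) (a b : R) : set (R -> E) :=
  [set phi | {within `[a, b], continuous phi}].

Definition supnorm (R : realType) (E : normedModType R) (a b : R) (phi : R -> E) : R :=
  sup [set `|phi t| | t in `[a, b]].

Definition Rc (R : realType) (E : normedModType R) (a b c : R) : set (R -> E) :=
  [set phi | E0 a b phi /\ supnorm a b phi = `|phi c|].

Definition is_linear_subspace (R : realType) (E : normedModType R)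
    (S : set (R -> E)) : Prop :=
  S (fun _ => 0) /\
  (forall phi psi, S phi -> S psi -> S (phi + psi)) /\
  (forall (k : R) phi, S phi -> S (k *: phi)).

(* Main.v *)
Require Import Defs.
From HB Require Import structures.
From mathcomp Require Import all_boot all_order all_algebra.
From mathcomp Require Import all_classical all_reals all_analysis.
Import Order.TTheory GRing.Theory Num.Theory.
Import numFieldNormedType.Exports.
Local Open Scope classical_set_scope.
Local Open Scope ring_scope.

Section H.
Variables (R : realType) (E : normedModType R) (a b c : R).
Hypothesis hab : a <= b.
Hypothesis hc : c \in `[a, b].

Lemma bnd (phi : R -> E) : E0 a b phi -> has_ubound [set `|phi t| | t in `[a, b]].
Proof.
move=> h.
have h2 : {within `[a, b], continuous (Num.Def.normr \o phi)}.
  apply: within_continuous_comp => // x _; exact: norm_continuous.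
have [m _ hm] := EVT_max hab h2.
exists `|phi m| => _ [t ht <-]; exact: hm.
Qed.

Lemma Rc_le (phi : R -> E) : Rc a b c phi -> forall t, t \in `[a, b] -> `|phi t| <= `|phi c|.
Proof.
move=> [h0 h1] t ht; rewrite -h1; apply: (ub_le_sup (bnd _ h0)).
by exists t.
Qed.

Lemma Rc_intro (phi : R -> E) : E0 a b phi ->
  (forall t, t \in `[a, b] -> `|phi t| <= `|phi c|) -> Rc a b c phi.
Proof.
move=> h0 h1; split => //; apply/eqP; rewrite eq_le; apply/andP; split.
  apply: ge_sup; first by exists `|phi c|, c.
  by move=> _ [t ht <-]; exact: h1.
apply: (ub_le_sup (bnd _ h0)); by exists c.
Qed.

Lemma E0_comp (phi : R -> E) (g : E -> E) : continuous g -> E0 a b phi -> E0 a b (g \o phi).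
Proof. by move=> hg h; apply: within_continuous_comp => // x _; exact: hg. Qed.

Lemma Rc_scale (k : R) (phi : R -> E) : Rc a b c phi -> Rc a b c (k *: phi).
Proof.
move=> h; have [hE _] := h; apply: Rc_intro.
  have -> : k *: phi = (fun v : E => k *: v) \o phi by apply/funext.
  have hg : continuous (fun v : E => k *: v) := @scaler_continuous R E k.
  exact: (@E0_comp phi _ hg hE).
move=> t ht /=; rewrite !normrZ ler_wpM2l //; exact: Rc_le.
Qed.

Lemma Rc_zero : Rc a b c (fun _ => 0 : E).
Proof.
apply: Rc_intro => //.
move=> x; exact: cvg_cst.
Qed.

End H.


Section M.
Variables (R : realType) (E : normedModType R) (a b c : R).
Hypothesis hab : a <= b.
Hypothesis hc : c \in `[a, b].

Lemma hN (xi : R -> E) : Rc a b c xi -> Rc a b c (- xi).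
Proof.
move=> h; have -> : - xi = (-1 : R) *: xi.
  by apply/funext => t /=; rewrite scaleN1r.
exact: Rc_scale.
Qed.

Lemma s1 : (forall phi xi : R -> E, Rc a b c phi -> Rc a b c xi -> Rc a b c (phi - xi)) ->
  (forall phi psi : R -> E, Rc a b c phi -> Rc a b c psi -> Rc a b c (phi + psi)).
Proof.
move=> H phi psi hp hq.
have h0 := H _ _ hq hq.
have e0 : psi - psi = (fun _ => 0) by apply/funext => t /=; rewrite subrr.
rewrite e0 in h0.
have h1 := H _ _ h0 hq.
have := H _ _ hp h1.
have -> : phi - ((fun _ => 0) - psi) = phi + psi.
  by apply/funext => t /=; rewrite sub0r opprK.
by [].
Qed.

Lemma s2 : (forall phi psi : R -> E, Rc a b c phi -> Rc a b c psi -> Rc a b c (phi + psi)) ->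
  (forall phi xi : R -> E, Rc a b c phi -> Rc a b c xi -> Rc a b c (phi - xi)).
Proof. move=> H phi xi hp hx; apply: H => //; exact: hN. Qed.

Lemma s3 : (forall phi psi : R -> E, Rc a b c phi -> Rc a b c psi -> Rc a b c (phi + psi)) ->
  is_linear_subspace (Rc a b c : set (R -> E)).
Proof.
move=> H; split; first exact: Rc_zero.
split => //; move=> k phi; exact: Rc_scale.
Qed.

End M.

Theorem lemma2 (R : realType) (E : completeNormedModType R) (a b c : R)
  (hab : a <= b) (hc : c \in `[a, b]) :
  let Rcs := Rc a b c : set (R -> E) in
  ((forall phi xi, Rcs phi -> Rcs xi -> Rcs (phi - xi)) <->
   (forall phi psi, Rcs phi -> Rcs psi -> Rcs (phi + psi))) /\
  ((forall phi psi, Rcs phi -> Rcs psi -> Rcs (phi + psi)) <->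
   is_linear_subspace Rcs).
Proof.
move=> Rcs.
split; split.
- exact: s1.
- exact: s2.
- exact: s3.
- move=> [_ [H _]]; exact: H.
Qed.
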